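(* Let $k<n$ and let $A_1,\ldots,A_k$ be $n\times n$ ASMs, $A_s=[a_{ijs}]$, such that for all $1\le i,j\le n$ the vector $(a_{ij1},\ldots,a_{ijk})$ is $(1,* )$-alternating. Then there exist $n\times n$ permutation matrices $A_{k+1},\ldots,A_n$ such that $[A_1,\ldots,A_k,A_{k+1},\ldots,A_n]$ is an $n\times n\times n$ ASHM.
   Context: An $n\times n$ alternating sign matrix (ASM) is an $n\times n$ matrix with entries in $\{0,1,-1\}$ such that in every row and column the nonzeros alternate in sign, beginning and ending with $+1$. An $n\times n\times n$ hypermatrix $[A_1,\ldots,A_n]$ with $A_s=[a_{ijs}]_{i,j}$ is an ASHM if all entries are in $\{0,\pm1\}$ and in every line (obtained by fixing two of the three indices) the nonzeros alternate in sign beginning and ending with $+1$. A $(0,\pm1)$-vector is $(1,* )$-alternating if its nonzeros (if any) alternate in sign and the first nonzero is $1$ (the zero vector qualifies). *)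

(* Defs.v *)
From mathcomp Require Import all_boot all_order all_algebra all_fingroup.
Set Implicit Arguments. Unset Strict Implicit. Unset Printing Implicit Defensive.
Import GRing.Theory Num.Theory.
Local Open Scope ring_scope.

Definition zpm1 (x : int) : bool := [|| x == 0, x == 1 | x == -1].

(* (1,star)-alternating: the nonzero entries (if any) are +-1, alternate in sign,
   and the first nonzero is 1 (the zero vector qualifies). *)
Definition one_star_alt (s : seq int) : bool :=
  let t := [seq x <- s | x != 0] in
  all zpm1 s && (head 1 t == 1) && sorted (fun x y => y == - x) t.

Definition sign_alt (s : seq int) : bool :=
  let t := [seq x <- s | x != 0] in
  one_star_alt s && (t != [::]) && (last 0 t == 1).

Definition row_seq n (A : 'M[int]_n) (i : 'I_n) : seq int := [seq A i j | j <- enum 'I_n].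
Definition col_seq n (A : 'M[int]_n) (j : 'I_n) : seq int := [seq A i j | i <- enum 'I_n].

Definition is_ASM n (A : 'M[int]_n) : Prop :=
  (forall i j, zpm1 (A i j)) /\
  (forall i, sign_alt (row_seq A i)) /\ (forall j, sign_alt (col_seq A j)).

(* n x n x n alternating sign hypermatrix [H_1, ..., H_n], a_{ijs} = H s i j *)
Definition is_ASHM n (H : 'I_n -> 'M[int]_n) : Prop :=
  (forall i j s, zpm1 (H s i j)) /\
  (forall j s, sign_alt [seq H s i j | i <- enum 'I_n]) /\
  (forall i s, sign_alt [seq H s i j | j <- enum 'I_n]) /\
  (forall i j, sign_alt [seq H s i j | s <- enum 'I_n]).

(* Main.v *)
Require Import Defs.
From mathcomp Require Import all_boot all_order all_algebra all_fingroup.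
From mathcomp Require Import zify.
Set Implicit Arguments. Unset Strict Implicit. Unset Printing Implicit Defensive.
Import GRing.Theory Num.Theory.

Section Hall.
Variable T : finType.
Definition nbh (R : rel T) (A : {set T}) : {set T} := [set y | [exists x in A, R x y]].

Lemma nbhP (R : rel T) (A : {set T}) y : reflect (exists2 x, x \in A & R x y) (y \in nbh R A).
Proof. rewrite inE; exact: (iffP exists_inP). Qed.

Lemma hall_gen m : forall (D : {set T}) (R : rel T), #|D| <= m ->
  (forall A : {set T}, A \subset D -> #|A| <= #|nbh R A|) ->
  exists f : T -> T, {in D &, injective f} /\ {in D, forall x, R x (f x)}.
Proof.
elim: m => [|m IH] D R.
  by rewrite leqn0 cards_eq0 => /eqP -> _; exists id; split => x; rewrite inE.
have [Dm _ HH|] := leqP #|D| m; first exact: IH.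
move=> Dgt Dle HH.
case: (boolP [exists A : {set T}, [&& A \subset D, A != set0, A != D & #|nbh R A| <= #|A|]]).
  case/existsP => A /and4P [AD A0 AD' tight].
  have AltD : #|A| <= m.
    have : A \proper D by rewrite properEneq AD' AD.
    move/proper_card; lia.
  have [f1 [f1i f1R]] := IH A R AltD (fun B BA => HH B (subset_trans BA AD)).
  pose R2 := [rel x y | R x y && (y \notin nbh R A)].
  have D2le : #|D :\: A| <= m.
    have := cardsUI A (D :\: A).
    have -> : A :|: (D :\: A) = D by rewrite setDE setUIr setUCr setIT; apply/setUidPr.
    have -> : A :&: (D :\: A) = set0 by rewrite setDE setICA setICr setI0.
    rewrite cards0 addn0.
    have : 0 < #|A| by rewrite card_gt0.
    lia.
  have H2 : forall B : {set T}, B \subset D :\: A -> #|B| <= #|nbh R2 B|.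
    move=> B BDA.
    have ABD : A :|: B \subset D.
      by rewrite subUset AD (subset_trans BDA) // subsetDl.
    have h1 := HH _ ABD.
    have h2 := cardsUI A B.
    have AB0 : A :&: B = set0.
      apply/setP => x; rewrite !inE; apply/negP => /andP [xA xB].
      by have := subsetP BDA x xB; rewrite !inE xA.
    have sub : nbh R (A :|: B) \subset nbh R A :|: nbh R2 B.
      apply/subsetP => y /nbhP [x]; rewrite in_setU => /orP [xA|xB] Rxy; rewrite in_setU.
        by apply/orP; left; apply/nbhP; exists x.
      case yA: (y \in nbh R A); first by [].
      by apply/orP; right; apply/nbhP; exists x => //=; rewrite Rxy yA.
    have h3 := subset_leq_card sub.
    have h4 := cardsUI (nbh R A) (nbh R2 B).
    rewrite AB0 cards0 in h2. lia.
  have [f2 [f2i f2R]] := IH _ R2 D2le H2.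
  exists (fun x => if x \in A then f1 x else f2 x); split.
    move=> x y xD yD /=.
    case xA: (x \in A); case yA: (y \in A).
    - exact: f1i.
    - move=> e; have : f1 x \in nbh R A by apply/nbhP; exists x => //; exact: f1R.
      have : R2 y (f2 y) by apply: f2R; rewrite !inE yA yD.
      by rewrite /= e => /andP [_ /negP].
    - move=> e; have : f1 y \in nbh R A by apply/nbhP; exists y => //; exact: f1R.
      have : R2 x (f2 x) by apply: f2R; rewrite !inE xA xD.
      by rewrite /= e => /andP [_ /negP].
    - by apply: f2i; rewrite !inE ?xA ?yA.
  move=> x xD /=; case xA: (x \in A); first exact: f1R.
  have : R2 x (f2 x) by apply: f2R; rewrite !inE xA xD.
  by case/andP.
rewrite negb_exists => /forallP nt.
have : 0 < #|D| by lia.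
case/card_gt0P => x0 x0D.
have : 0 < #|nbh R [set x0]|.
  have := HH [set x0]; rewrite sub1set x0D cards1; exact.
case/card_gt0P => y0 /nbhP [x']; rewrite inE => /eqP -> Rxy0.
pose R' := [rel x y | R x y && (y != y0)].
have D'le : #|D :\ x0| <= m by move: Dle; rewrite (cardsD1 x0) x0D; lia.
have H' : forall B : {set T}, B \subset D :\ x0 -> #|B| <= #|nbh R' B|.
  move=> B BD.
  case: (eqVneq B set0) => [->|Bne]; first by rewrite cards0.
  have BD' : B \subset D by apply: subset_trans BD (subsetDl _ _).
  have := nt B; rewrite BD' Bne /=.
  have -> : (B != D) = true.
    apply/negP => /eqP e; have := subsetP BD x0; rewrite e x0D !inE eqxx.
    by move/(_ isT).
  rewrite /= -ltnNge => lt.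
  have sub : nbh R B \subset y0 |: nbh R' B.
    apply/subsetP => y /nbhP [x xB Rxy]; rewrite in_setU1.
    case: (eqVneq y y0) => //= ne; apply/nbhP; exists x => //=; by rewrite Rxy ne.
  have := subset_leq_card sub; rewrite cardsU1; lia.
have [f' [f'i f'R]] := IH _ R' D'le H'.
exists (fun x => if x == x0 then y0 else f' x); split.
  move=> x y xD yD /=.
  case: (eqVneq x x0) => [->|xn]; case: (eqVneq y x0) => [->|yn] //.
  - move=> e; have : R' y (f' y) by apply: f'R; rewrite !inE yn yD.
    by rewrite /= -e eqxx andbF.
  - move=> e; have : R' x (f' x) by apply: f'R; rewrite !inE xn xD.
    by rewrite /= e eqxx andbF.
  - by apply: f'i; rewrite !inE ?xn ?yn.
move=> x xD /=; case: (eqVneq x x0) => [->|xn] //.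
have : R' x (f' x) by apply: f'R; rewrite !inE xn xD.
by case/andP.
Qed.
End Hall.

Lemma sum_eq1 (T : finType) (a : T) : \sum_(j : T) (a == j) = 1.
Proof.
rewrite (bigD1 a) //= eqxx big1 // => j /negbTE; rewrite eq_sym => ->; done.
Qed.

Lemma sum_perm_eq1 (T : finType) (s : {perm T}) (j : T) : \sum_(i : T) (s i == j) = 1.
Proof.
rewrite (eq_bigr (fun i => nat_of_bool (((s^-1)%g j) == i))) ?sum_eq1 // => i _.
congr nat_of_bool; by apply/eqP/eqP => <-; rewrite ?permK ?permKV.
Qed.

Lemma hall_reg n r (B : 'I_n -> 'I_n -> nat) : 0 < r ->
  (forall i, \sum_j B i j = r) -> (forall j, \sum_i B i j = r) ->
  exists s : {perm 'I_n}, forall i, 0 < B i (s i).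
Proof.
move=> r0 Hr Hc.
pose R := [rel i j | 0 < B i j].
have [|f [fi fR]] := @hall_gen _ #|[set: 'I_n]| [set: 'I_n] R (leqnn _).
  move=> A _.
  rewrite -(leq_pmul2r r0).
  have e1 : #|A| * r = \sum_(i in A) \sum_j B i j.
    by rewrite -sum_nat_const; apply: eq_bigr => i _; rewrite Hr.
  have e2 : #|nbh R A| * r = \sum_(j in nbh R A) \sum_i B i j.
    by rewrite -sum_nat_const; apply: eq_bigr => i _; rewrite Hc.
  rewrite e1 e2.
  apply: (@leq_trans (\sum_(i in A) \sum_(j in nbh R A) B i j)).
    apply: leq_sum => i iA; rewrite [X in _ <= X]big_mkcond /=.
    apply: leq_sum => j _; case: ifP => // jN.
    case: (posnP (B i j)) => [->|pos] //.
    by move: jN; have -> : j \in nbh R A by apply/nbhP; exists i.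
  rewrite exchange_big /=; apply: leq_sum => j _.
  by rewrite [X in _ <= X](bigID (mem A)) /= leq_addr.
have finj : injective f by move=> x y; apply: fi; rewrite inE.
by exists (perm finj) => i; rewrite permE; apply: (fR i); rewrite inE.
Qed.

Lemma decomp n r (B : 'I_n -> 'I_n -> nat) :
  (forall i, \sum_j B i j = r) -> (forall j, \sum_i B i j = r) ->
  exists sg : nat -> {perm 'I_n}, forall i j, B i j = \sum_(t < r) (sg t i == j).
Proof.
elim: r B => [|r IH] B Hr Hc.
  exists (fun _ => 1%g) => i j; rewrite big_ord0.
  apply/eqP; rewrite -leqn0 -(Hr i) (bigD1 j) //= leq_addr //.
have [s0 Hs0] := hall_reg (ltn0Sn r) Hr Hc.
pose B' i j := B i j - (s0 i == j).
have BB' : forall i j, B i j = B' i j + (s0 i == j).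
  move=> i j; rewrite /B' subnK //; case: eqP => [<-|] //.
have [||sg Hsg] := IH B'.
- move=> i; have := Hr i; rewrite (eq_bigr (fun j => B' i j + (s0 i == j))) => [|j _]; last exact: BB'.
  by rewrite big_split /= sum_eq1 addn1 => [[]].
- move=> j; have := Hc j; rewrite (eq_bigr (fun i => B' i j + (s0 i == j))) => [|i _]; last exact: BB'.
  by rewrite big_split /= sum_perm_eq1 addn1 => [[]].
exists (fun t => if t is t'.+1 then sg t' else s0) => i j.
by rewrite big_ord_recl /= BB' Hsg addnC.
Qed.

Local Open Scope ring_scope.

Lemma alt_path (t : seq int) (a : int) : path (fun x y => y == - x) a t ->
  last a t = (-1) ^+ (size t) * a /\
  \sum_(x <- a :: t) x = (if odd (size t) then 0 else a).
Proof.
elim: t a => [|b t IH] a /=.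
  by move=> _; rewrite expr0 mul1r big_cons big_nil addr0.
case/andP => /eqP -> /IH [-> e]; split.
  by rewrite exprS mulN1r mulrN mulNr.
rewrite big_cons e; case: (odd (size t)) => /=; first by rewrite addr0.
by rewrite subrr.
Qed.

Lemma sum_filter (s : seq int) : \sum_(x <- [seq x <- s | x != 0]) x = \sum_(x <- s) x.
Proof.
rewrite big_filter big_mkcond; apply: eq_bigr => x _; case: eqP => // ->.
Qed.

Lemma signr_cases n : (-1 : int) ^+ n = if odd n then -1 else 1.
Proof. by rewrite -signr_odd; case: (odd n); rewrite ?expr0 ?expr1. Qed.

Lemma osa_cases u : one_star_alt u ->
  (\sum_(x <- u) x = 0 /\ ([seq x <- u | x != 0] = [::] \/ last 0 [seq x <- u | x != 0] = -1))
  \/ (\sum_(x <- u) x = 1 /\ [seq x <- u | x != 0] != [::] /\ last 0 [seq x <- u | x != 0] = 1).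
Proof.
rewrite /one_star_alt => /andP [/andP [_ Hh] Hs].
rewrite -sum_filter; move: Hh Hs.
case: [seq x <- u | x != 0] => [|a t] /=; first by rewrite big_nil; left; split; [|left].
move=> /eqP -> /alt_path [hl hs]; rewrite hs hl signr_cases mulr1.
by case: (odd (size t)); [left; split; [|right] | right].
Qed.

Lemma sign_alt_sum u : sign_alt u -> \sum_(x <- u) x = 1.
Proof.
rewrite /sign_alt => /andP [/andP [/osa_cases [[_ [->|->]]|[-> _]] ne] /eqP hl] //.
Qed.

Definition b01 (x : int) := (x == 0) || (x == 1).

Lemma filter01 v : all b01 v ->
  [seq x <- v | x != 0] = nseq (count (pred1 1) v) 1 /\
  \sum_(x <- v) x = (count (pred1 1) v)%:R.
Proof.
elim: v => [|x v IH] /=; first by rewrite big_nil.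
case/andP => /orP [] /eqP -> /IH [e1 e2]; rewrite big_cons e1 e2 /=.
  by rewrite add0r add0n.
by rewrite add0n -addn1 natrD addrC.
Qed.

Lemma vert u v : one_star_alt u -> all b01 v ->
  \sum_(x <- v) x = 1 - \sum_(x <- u) x -> sign_alt (u ++ v).
Proof.
move=> hu hv hs.
have [e1 e2] := filter01 hv.
have zv : all zpm1 v.
  by apply: sub_all hv => x; rewrite /b01 /zpm1 => /orP [] ->; rewrite ?orbT.
have hu' := hu; move: hu' => /andP [/andP [zu hh] hsrt].
rewrite /sign_alt /one_star_alt filter_cat e1 all_cat zu zv /=.
case: (osa_cases hu) => [[su hl]|[su [ne hl]]]; rewrite su ?subr0 in hs; rewrite hs in e2.
- have -> : count (pred1 1) v = 1%N by apply/eqP; rewrite -(eqr_nat int) -e2.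
  move: hh hsrt hl; case: [seq x <- u | x != 0] => [|a t] //= hh hsrt [] // hl.
  by rewrite hh cats1 rcons_path hsrt /= hl opprK eqxx last_rcons.
- have -> : count (pred1 1) v = 0%N by apply/eqP; rewrite -(eqr_nat int) -e2 subrr.
  by rewrite cats0 hh hsrt ne hl.
Qed.

Lemma pe n (s : {perm 'I_n}) i j : (perm_mx s : 'M[int]_n) i j = (s i == j)%:R.
Proof. by rewrite perm_mxEsub !mxE. Qed.
Lemma rs n (F : 'I_n -> int) : \sum_(x <- [seq F j | j <- enum 'I_n]) x = \sum_j F j.
Proof. by rewrite big_map big_enum. Qed.
Lemma io r (F : nat -> int) : \sum_(x <- [seq F t | t <- iota 0 r]) x = \sum_(t < r) F t.
Proof. by rewrite big_map -(big_mkord xpredT) /index_iota subn0. Qed.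

Lemma osa_nil : one_star_alt [::]. Proof. by []. Qed.

Lemma perm_line n (F : 'I_n -> int) (a : 'I_n) : (forall j, F j = (a == j)%:R) ->
  sign_alt [seq F j | j <- enum 'I_n].
Proof.
move=> hF; change (sign_alt ([::] ++ [seq F j | j <- enum 'I_n])); apply: vert => //.
  by apply/allP => x /mapP [j _ ->]; rewrite hF /b01; case: (a == j).
rewrite rs big_nil subr0 (eq_bigr _ (fun j _ => hF j)) -natr_sum.
have := sum_eq1 a; by move=> ->.
Qed.

Theorem mainTheorem11 (n k : nat) (hk : (k < n)%N) (A : 'I_k -> 'M[int]_n) :
  (forall s, is_ASM (A s)) ->
  (forall i j, one_star_alt [seq A s i j | s <- enum 'I_k]) ->
  exists H : 'I_n -> 'M[int]_n,
    is_ASHM H /\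
    (forall s : 'I_n, forall hs : (s < k)%N, H s = A (Ordinal hs)) /\
    (forall s : 'I_n, (k <= s)%N -> is_perm_mx (H s)).
Proof.
move=> hA hV.
have rowsum : forall s i, \sum_j A s i j = 1.
  by move=> s i; have [_ [/(_ i) /sign_alt_sum]] := hA s; rewrite /row_seq rs.
have colsum : forall s j, \sum_i A s i j = 1.
  by move=> s j; have [_ [_ /(_ j) /sign_alt_sum]] := hA s; rewrite /col_seq rs.
pose p i j := \sum_(x <- [seq A s i j | s <- enum 'I_k]) x.
have p01 : forall i j, p i j = 0 \/ p i j = 1.
  by move=> i j; rewrite /p; case: (osa_cases (hV i j)) => [[->]|[->]]; [left|right].
pose B i j : nat := (p i j == 0).
have pB : forall i j, p i j + (B i j)%:R = 1.
  by move=> i j; rewrite /B; case: (p01 i j) => ->.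
have Br : forall i, (\sum_j B i j = n - k)%N.
  move=> i.
  have e : \sum_j (p i j + (B i j)%:R) = \sum_(j : 'I_n) (1 : int).
    by apply: eq_bigr => j _; rewrite pB.
  rewrite big_split /= sumr_const card_ord -natr_sum in e.
  have ep : \sum_j p i j = k%:R.
    rewrite /p; under eq_bigr do rewrite rs.
    rewrite exchange_big /= (eq_bigr (fun _ => 1)) => [|s _]; last exact: rowsum.
    by rewrite sumr_const card_ord.
  rewrite ep -natrD in e; move/eqP: e; rewrite -[1 *+ n]/(n%:R) eqr_nat => /eqP e'; by rewrite -[X in (X - k)%N]e' addKn.
have Bc : forall j, (\sum_i B i j = n - k)%N.
  move=> j.
  have e : \sum_(x : 'I_n) (p x j + (B x j)%:R) = \sum_(x : 'I_n) (1 : int).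
    by apply: eq_bigr => x _; rewrite pB.
  rewrite big_split /= sumr_const card_ord -natr_sum in e.
  have ep : \sum_(x : 'I_n) p x j = k%:R.
    rewrite /p; under eq_bigr do rewrite rs.
    rewrite exchange_big /= (eq_bigr (fun _ => 1)) => [|s _]; last exact: colsum.
    by rewrite sumr_const card_ord.
  rewrite ep -natrD in e; move/eqP: e; rewrite -[1 *+ n]/(n%:R) eqr_nat => /eqP e'; by rewrite -[X in (X - k)%N]e' addKn.
have [sg Hsg] := decomp Br Bc.
pose H (s : 'I_n) : 'M[int]_n :=
  if insub (val s) : option 'I_k is Some s' then A s' else perm_mx (sg (val s - k)%N).
exists H; split; last split.
- split; last split; last split.
  + move=> i j s; rewrite /H; case: insub => [s'|]; first by have [h _] := hA s'; apply: h.
    by rewrite pe /zpm1; case: (_ == j).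
  + move=> j s; rewrite /H; case: insub => [s'|]; first by have [_ [_ h]] := hA s'; exact: h.
    apply: (perm_line (a := ((sg (val s - k)%N)^-1)%g j)) => i.
    by rewrite pe -[in RHS](inj_eq (@perm_inj _ (sg (val s - k)%N))) permKV eq_sym.
  + move=> i s; rewrite /H; case: insub => [s'|]; first by have [_ [h _]] := hA s'; exact: h.
    by apply: (perm_line (a := sg (val s - k)%N i)) => j; rewrite pe.
  + move=> i j.
    pose G (m : nat) : int :=
      if insub m : option 'I_k is Some s' then A s' i j else (sg (m - k)%N i == j)%:R.
    have -> : [seq H s i j | s <- enum 'I_n] =
       [seq A s i j | s <- enum 'I_k] ++ [seq (sg t i == j)%:R | t <- iota 0 (n - k)].
      transitivity [seq G (val s) | s <- enum 'I_n].
        apply: eq_map => s; rewrite /H /G; case: insub => [s'|] //.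
        exact: pe.
      rewrite (map_comp G val) val_enum_ord -[X in iota 0 X](subnKC (ltnW hk)) iotaD map_cat.
      congr (_ ++ _).
        rewrite -val_enum_ord -map_comp; apply: eq_map => s /=.
        by rewrite /G valK.
      rewrite add0n -[k in iota k _]addn0 iotaDl -map_comp.
      apply: eq_map => t /=; rewrite /G insubF ?addKn //.
      by apply/negbTE; rewrite -leqNgt leq_addr.
    apply: vert => //.
      by apply/allP => x /mapP [t _ ->]; rewrite /b01; case: (sg t i == j).
    rewrite io -natr_sum -Hsg.
    by have := pB i j; rewrite /p => e; apply/eqP; rewrite eq_sym subr_eq; apply/eqP; rewrite -[LHS]e addrC.
- by move=> s hs; rewrite /H insubT.
move=> s hs; rewrite /H insubF; last by apply/negbTE; rewrite -leqNgt.
by apply/existsP; eexists.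
Qed.
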